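(* Let $\mathcal H$ be as in the context, a graded algebra satisfying axioms ($m0$)–($m3$). Then for $f\in C\subseteq P_n$ and $g\in C'\subseteq P_m$ ($C,C'$ connected components), $$M_f\cdot M_g=\sum_{h\in P_{n+m}}|A^h_{f,g}|\,M_h,$$ where $A^h_{f,g}$ is the set of $\zeta\in Sh(C,C')$ such that $\zeta(f,g)\le h$ and such that, whenever $f'\ge f$ in $C$ and $g'\ge g$ in $C'$ satisfy $\zeta(f',g')\le h$, we have $f'=f$ and $g'=g$. In particular the structure constants are nonnegative integers.
   Context: For each $n\ge0$ let $P_n$ be a finite poset; connected components of $P_n$ are those of its Hasse diagram. $\mathcal H=\bigoplus_n\mathcal H_n$ is a graded vector space with $\mathcal H_n$ having basis $\{F_f:f\in P_n\}$, and the basis $\{M_f\}$ is defined by $F_f=\sum_{g\in P_n,\,g\ge f}M_g$. A shuffle on components $C\subseteq P_n$, $C'\subseteq P_m$ is a function $\zeta:C\times C'\to P_{n+m}$. Assume that for each ordered pair of components $(C,C')$ there is a set $Sh(C,C')$ of shuffles such that: ($m0$) any two elements in the same connected component of $P_n$ have a least upper bound $\vee$; ($m1$) $\mathcal H$ is an algebra and $F_fF_g=\sum_{\zeta\in Sh(C,C')}F_{\zeta(f,g)}$ for $f\in C$, $g\in C'$; ($m2$) for $f\le f'$ in $C$, $g\le g'$ in $C'$ and $\zeta\in Sh(C,C')$, $\zeta(f,g)\le\zeta(f',g')$; ($m3$) for $f_1,f_2\in C$, $g_1,g_2\in C'$ and $\zeta\in Sh(C,C')$, $\zeta(f_1\vee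 f_2,g_1\vee g_2)\le\zeta(f_1,g_1)\vee\zeta(f_2,g_2)$. *)

(* Defs.v *)
From HB Require Import structures.
From mathcomp Require Import all_boot all_order all_algebra.
Set Implicit Arguments. Unset Strict Implicit. Unset Printing Implicit Defensive.
Import Order.TTheory GRing.Theory.

Local Open Scope order_scope.

Section PosetDefs.
Context {disp : Order.disp_t} {T : finPOrderType disp}.

Definition covers (x y : T) : bool :=
  (x < y) && [forall z : T, ~~ ((x < z) && (z < y))].

Definition hasse_adj : rel T := fun x y => covers x y || covers y x.

Definition hcomp (x : T) : {set T} := [set y | connect hasse_adj x y].

Definition is_lub (x y z : T) : Prop :=
  [/\ x <= z, y <= z & forall w : T, x <= w -> y <= w -> z <= w].

End PosetDefs.

Definition Aset {d : Order.disp_t} (P : nat -> finPOrderType d) (n m : nat)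
  (sh : {set {ffun P n * P m -> P (n + m)}}) (f : P n) (g : P m) (h : P (n + m))
  : {set {ffun P n * P m -> P (n + m)}} :=
  [set z in sh | (z (f, g) <= h) &&
     [forall f' : P n, forall g' : P m,
        [&& f' \in hcomp f, g' \in hcomp g, f <= f', g <= g' & z (f', g') <= h]
        ==> (f' == f) && (g' == g)]].

(* Main.v *)
Require Import Defs.
From HB Require Import structures.
From mathcomp Require Import all_boot all_order all_algebra.
Import Order.TTheory GRing.Theory.
Set Implicit Arguments. Unset Strict Implicit.

Lemma hasse_sym d (T : finPOrderType d) : symmetric (@hasse_adj d T).
Proof. by move=> x y; rewrite /hasse_adj orbC. Qed.

Lemma le_connect d (T : finPOrderType d) (x y : T) :
  (x <= y)%O -> connect hasse_adj x y.
Proof.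
suff H: forall k (x y : T), #|[pred z | (x < z)%O && (z < y)%O]| < k ->
   (x <= y)%O -> connect hasse_adj x y.
  by apply: H.
elim=> [//|k IH] {}x {}y Hk; rewrite le_eqVlt => /orP[/eqP->//|lt_xy].
case: (boolP [forall z : T, ~~ (((x < z)%O && (z < y)%O))]) => [Hc|].
  apply: connect1; rewrite /hasse_adj /covers lt_xy Hc //.
rewrite negb_forall => /existsP[z]; rewrite negbK => /andP[xz zy].
have H1 : connect hasse_adj x z.
  apply: IH (ltW xz); rewrite ltnS in Hk; apply: (leq_trans _ Hk); apply: proper_card; apply/properP; split.
    by apply/subsetP=> w; rewrite !inE => /andP[-> wz] /=; exact: lt_trans wz zy.
  by exists z; rewrite !inE ?xz ?zy ?ltxx ?andbF.
apply: connect_trans H1 _.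
apply: IH (ltW zy); rewrite ltnS in Hk; apply: (leq_trans _ Hk); apply: proper_card; apply/properP; split.
  by apply/subsetP=> w; rewrite !inE => /andP[zw ->]; rewrite (lt_trans xz zw).
by exists z; rewrite !inE ?xz ?zy ?ltxx.
Qed.

Lemma le_hcomp d (T : finPOrderType d) (x y : T) : (x <= y)%O -> y \in hcomp x.
Proof. by move=> H; rewrite inE le_connect. Qed.

Lemma hcomp_eq d (T : finPOrderType d) (x y : T) : y \in hcomp x -> hcomp y = hcomp x.
Proof.
rewrite inE => H; apply/setP => w; rewrite !inE.
by rewrite (same_connect (sym_connect_sym (@hasse_sym d T)) H).
Qed.

Lemma hcomp_ub d (T : finPOrderType d) (x y u : T) :
  (x <= u)%O -> (y <= u)%O -> y \in hcomp x.
Proof.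
move=> xu yu; rewrite inE (connect_trans (le_connect xu)) //.
by rewrite (sym_connect_sym (@hasse_sym d T)) le_connect.
Qed.

Lemma exists_max (T : finType) (r : rel T) (Q : {pred T}) :
  reflexive r -> antisymmetric r -> transitive r ->
  forall x, x \in Q -> exists2 p, p \in Q & (r x p /\ forall q, q \in Q -> r p q -> q = p).
Proof.
move=> rr ar tr.
suff H: forall k x, x \in Q -> #|[pred y in Q | r x y]| < k ->
  exists2 p, p \in Q & (r x p /\ forall q, q \in Q -> r p q -> q = p).
  by move=> x Qx; apply: (H _ x Qx).
elim=> [//|k IH] x Qx Hk; rewrite ltnS in Hk.
case: (boolP [exists q, [&& q \in Q, r x q & q != x]]) => [/existsP[q /and3P[Qq xq qx]]|].
  have Hc : #|[pred y in Q | r q y]| < k.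
    apply: (leq_trans _ Hk); apply: proper_card; apply/properP; split.
      by apply/subsetP=> w; rewrite !inE => /andP[-> qw]; rewrite (tr _ _ _ xq qw).
    exists x; rewrite !inE ?Qx ?rr //=.
    apply/negP=> qx'; move: qx; rewrite (ar _ _ (introT andP (conj xq qx'))) eqxx //.
  have [p Qp [qp pmax]] := IH q Qq Hc.
  exists p => //; split => //; exact: tr qp.
rewrite negb_exists => /forallP Hn; exists x => //; split => // q Qq xq.
by move: (Hn q); rewrite Qq xq /= negbK => /eqP.
Qed.

Lemma card_up_lt d (T : finPOrderType d) (x y : T) :
  (x < y)%O -> #|[set z | (y < z)%O]| < #|[set z | (x < z)%O]|.
Proof.
move=> xy; apply: proper_card; apply/properP; split.
  by apply/subsetP=> w; rewrite !inE => /(lt_trans xy).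
by exists y; rewrite !inE ?xy ?ltxx.
Qed.

Lemma card_up_le d (T : finPOrderType d) (x y : T) :
  (x <= y)%O -> #|[set z | (y < z)%O]| <= #|[set z | (x < z)%O]|.
Proof.
move=> xy; apply: subset_leq_card.
by apply/subsetP=> w; rewrite !inE => /(le_lt_trans xy).
Qed.
Unset Implicit Arguments.
Local Open Scope ring_scope.

Theorem mainTheorem15
  (d : Order.disp_t) (P : nat -> finPOrderType d)
  (K : fieldType) (A : algType K)
  (F M : forall n : nat, P n -> A)
  (Sh : forall n m : nat, {set P n} -> {set P m} ->
          {set {ffun P n * P m -> P (n + m)%N}})
  (* {F_f : n >= 0, f in P_n} is a basis of H = A (free and spanning) *)
  (Ffree : forall (s : seq {n : nat & P n}) (c : {n : nat & P n} -> K),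
      uniq s -> \sum_(p <- s) c p *: F (tag p) (tagged p) = 0 ->
      forall p, p \in s -> c p = 0)
  (Fspan : forall a : A, exists (s : seq {n : nat & P n}) (c : {n : nat & P n} -> K),
      a = \sum_(p <- s) c p *: F (tag p) (tagged p))
  (* definition of the M basis *)
  (FM : forall n (f : P n), F n f = \sum_(g : P n | (f <= g)%O) M n g)
  (* shuffles are determined by their values on C x C' *)
  (Shfun : forall n m (f : P n) (g : P m) (z1 z2 : {ffun P n * P m -> P (n + m)%N}),
      z1 \in Sh n m (hcomp f) (hcomp g) -> z2 \in Sh n m (hcomp f) (hcomp g) ->
      (forall f' g', f' \in hcomp f -> g' \in hcomp g -> z1 (f', g') = z2 (f', g')) ->
      z1 = z2)
  (* (m0) *)
  (m0 : forall n (x y : P n), y \in hcomp x -> exists z, is_lub x y z)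
  (* (m1) *)
  (m1 : forall n m (f : P n) (g : P m),
      F n f * F m g = \sum_(z in Sh n m (hcomp f) (hcomp g)) F (n + m)%N (z (f, g)))
  (* (m2) *)
  (m2 : forall n m (f0 : P n) (g0 : P m) z, z \in Sh n m (hcomp f0) (hcomp g0) ->
      forall f f' g g', f \in hcomp f0 -> f' \in hcomp f0 -> g \in hcomp g0 -> g' \in hcomp g0 ->
      (f <= f')%O -> (g <= g')%O -> (z (f, g) <= z (f', g'))%O)
  (* (m3) *)
  (m3 : forall n m (f0 : P n) (g0 : P m) z, z \in Sh n m (hcomp f0) (hcomp g0) ->
      forall f1 f2 g1 g2, f1 \in hcomp f0 -> f2 \in hcomp f0 ->
        g1 \in hcomp g0 -> g2 \in hcomp g0 ->
      forall a b c, is_lub f1 f2 a -> is_lub g1 g2 b ->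
        is_lub (z (f1, g1)) (z (f2, g2)) c -> (z (a, b) <= c)%O)
  (n m : nat) (f : P n) (g : P m) :
  M n f * M m g =
    \sum_(h : P (n + m)%N) (#|Aset (Sh n m (hcomp f) (hcomp g)) f g h|)%:R *: M (n + m)%N h.
Proof.
pose R (f' : P n) (g' : P m) := \sum_(h : P (n + m)%N)
   (#|Aset (Sh n m (hcomp f') (hcomp g')) f' g' h|)%:R *: M (n + m)%N h.
have count : forall (f0 : P n) (g0 : P m) (h : P (n + m)%N),
  (\sum_(f' | (f0 <= f')%O) \sum_(g' | (g0 <= g')%O)
     #|Aset (Sh n m (hcomp f') (hcomp g')) f' g' h|)%N
  = #|[set z in Sh n m (hcomp f0) (hcomp g0) | (z (f0, g0) <= h)%O]|.
  move=> f0 g0 h.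
  set S := Sh n m (hcomp f0) (hcomp g0).
  have ShE : forall f' g', (f0 <= f')%O -> (g0 <= g')%O ->
      Sh n m (hcomp f') (hcomp g') = S.
    by move=> f' g' Hf Hg; rewrite /S (hcomp_eq (le_hcomp Hf)) (hcomp_eq (le_hcomp Hg)).
  transitivity (\sum_(f' | (f0 <= f')%O) \sum_(g' | (g0 <= g')%O)
     \sum_z (if z \in Aset S f' g' h then 1 else 0))%N.
    apply: eq_bigr => f' Hf; apply: eq_bigr => g' Hg.
    by rewrite ShE // -sum1_card big_mkcond.
  rewrite -sum1_card [RHS]big_mkcond /=.
  under eq_bigr => f' _ do rewrite exchange_big.
  rewrite exchange_big /=. apply: eq_bigr => z _.
  case: (boolP (z \in S)) => zS; last first.
    rewrite inE (negbTE zS) /= big1 // => f' _; rewrite big1 // => g' _.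
    by rewrite /Aset inE (negbTE zS).
  rewrite inE zS /=.
  case: (boolP (z (f0, g0) <= h)%O) => Hz; last first.
    rewrite big1 // => f' Hf; rewrite big1 // => g' Hg.
    rewrite /Aset inE zS /=; case: ifP => // /andP[Hz' _].
    case/negP: Hz; apply: le_trans Hz'.
    by apply: (m2 n m f0 g0 z zS) => //; rewrite ?le_hcomp ?inE ?connect0.
  have uniqA : forall f1 g1 f2 g2, (f0 <= f1)%O -> (f0 <= f2)%O ->
      (g0 <= g1)%O -> (g0 <= g2)%O ->
      z \in Aset S f1 g1 h -> z \in Aset S f2 g2 h -> f1 = f2 /\ g1 = g2.
    move=> f1 g1 f2 g2 Hf1 Hf2 Hg1 Hg2.
    rewrite /Aset !inE zS /= => /andP[h1 /forallP A1] /andP[h2 /forallP A2].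
    have f12 : f2 \in hcomp f1 by rewrite (hcomp_eq (le_hcomp Hf1)) le_hcomp.
    have g12 : g2 \in hcomp g1 by rewrite (hcomp_eq (le_hcomp Hg1)) le_hcomp.
    have [a La] := m0 n f1 f2 f12.
    have [b Lb] := m0 m g1 g2 g12.
    have La' := La; have Lb' := Lb.
    case: La' => f1a f2a _; case: Lb' => g1b g2b _.
    have fa : (f0 <= a)%O by apply: le_trans f1a.
    have gb : (g0 <= b)%O by apply: le_trans g1b.
    have z1 : (z (f1, g1) <= z (a, b))%O.
      by apply: (m2 n m f0 g0 z zS) => //; rewrite le_hcomp.
    have z2 : (z (f2, g2) <= z (a, b))%O.
      by apply: (m2 n m f0 g0 z zS) => //; rewrite le_hcomp.
    have [c Lc] := m0 _ _ _ (hcomp_ub z1 z2).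
    have Lc' := Lc; case: Lc' => _ _ cub.
    have zab : (z (a, b) <= h)%O.
      apply: le_trans (cub h h1 h2).
      by apply: (m3 n m f0 g0 z zS f1 f2 g1 g2) => //; rewrite le_hcomp.
    move: (A1 a) => /forallP /(_ b) /implyP.
    rewrite (le_hcomp f1a) (le_hcomp g1b) f1a g1b zab => /(_ isT) /andP[/eqP e1 /eqP e2].
    move: (A2 a) => /forallP /(_ b) /implyP.
    rewrite (le_hcomp f2a) (le_hcomp g2b) f2a g2b zab => /(_ isT) /andP[/eqP e3 /eqP e4].
    by split; congruence.
  pose r := fun (p q : P n * P m) => (p.1 <= q.1)%O && (p.2 <= q.2)%O.
  pose Q := [pred p : P n * P m | [&& (f0 <= p.1)%O, (g0 <= p.2)%O & (z p <= h)%O]].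
  have rr : reflexive r by move=> p; rewrite /r !lexx.
  have ar : antisymmetric r.
    move=> [p1 p2] [q1 q2]; rewrite /r /= => /andP[/andP[a1 a2] /andP[b1 b2]].
    by rewrite (@le_anti _ _ p1 q1) ?a1 ?b1 // (@le_anti _ _ p2 q2) ?a2 ?b2.
  have tr : transitive r.
    move=> [p1 p2] [q1 q2] [s1 s2]; rewrite /r /= => /andP[a1 a2] /andP[b1 b2].
    by rewrite (le_trans a1 b1) (le_trans a2 b2).
  have Q0 : (f0, g0) \in Q by rewrite inE /= !lexx Hz.
  have [[a b] Qp [_ pmax]] := exists_max rr ar tr Q0.
  move: Qp; rewrite inE /= => /and3P[fa gb zab].
  have Iab : z \in Aset S a b h.
    rewrite /Aset inE zS zab /=; apply/forallP => f''; apply/forallP => g''.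
    apply/implyP => /and5P[_ _ af bg zh].
    have := pmax (f'', g''); rewrite inE /= (le_trans fa af) (le_trans gb bg) zh.
    by rewrite /r /= af bg => /(_ isT isT) [-> ->]; rewrite !eqxx.
  rewrite (bigD1 a fa) /= (bigD1 b gb) /= Iab big1 => [|g' /andP[Hg ne]]; last first.
    case: ifP => // I'; have [_ e] := uniqA _ _ _ _ fa fa Hg gb I' Iab.
    by rewrite e eqxx in ne.
  rewrite big1 // => f' /andP[Hf ne]; rewrite big1 // => g' Hg.
  case: ifP => // I'; have [e _] := uniqA _ _ _ _ Hf fa Hg gb I' Iab.
  by rewrite e eqxx in ne.
have key : forall (f0 : P n) (g0 : P m), \sum_(f' | (f0 <= f')%O) \sum_(g' | (g0 <= g')%O)
     (M n f' * M m g' - R f' g') = 0.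
  move=> f0 g0.
  under eq_bigr => f' _ do rewrite sumrB.
  rewrite sumrB; apply/eqP; rewrite subr_eq0; apply/eqP.
  rewrite -big_distrlr /= -!FM m1.
  rewrite (eq_bigr (fun z : {ffun P n * P m -> P (n + m)%N} => \sum_(h | (z (f0, g0) <= h)%O) M (n + m)%N h)); last by move=> z _; rewrite FM.
  rewrite (exchange_big_dep xpredT) //=.
  rewrite /R.
  under [RHS]eq_bigr => f' _ do rewrite exchange_big.
  rewrite [RHS]exchange_big; apply: eq_bigr => h _.
  transitivity ((\sum_(f' | (f0 <= f')%O) \sum_(g' | (g0 <= g')%O)
     #|Aset (Sh n m (hcomp f') (hcomp g')) f' g' h|)%N%:R *: M (n + m)%N h); last first.
    rewrite natr_sum scaler_suml; apply: eq_bigr => f' _.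
    by rewrite natr_sum scaler_suml.
  rewrite count scaler_nat -sumr_const; apply: eq_bigl => z; by rewrite inE.
have main : forall k (f0 : P n) (g0 : P m),
    (#|[set f' | (f0 < f')%O]| + #|[set g' | (g0 < g')%O]| < k)%N ->
    M n f0 * M m g0 = R f0 g0.
  elim=> // k IH f0 g0 Hk.
  have := key f0 g0.
  rewrite (bigD1 f0 (lexx f0)) /= (bigD1 g0 (lexx g0)) /= big1 => [|g' /andP[Hg ne]]; last first.
    apply/eqP; rewrite subr_eq0; apply/eqP; apply: IH.
    rewrite ltnS in Hk; apply: (leq_trans _ Hk); rewrite ltn_add2l; apply: card_up_lt.
    by rewrite lt_neqAle Hg eq_sym ne.
  rewrite big1 => [|f' /andP[Hf ne]]; last first.
    rewrite big1 // => g' Hg.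
    apply/eqP; rewrite subr_eq0; apply/eqP; apply: IH.
    rewrite ltnS in Hk; apply: (leq_trans _ Hk); apply: leq_ltn_trans (leq_add (leqnn _) (card_up_le Hg)) _.
    rewrite ltn_add2r; apply: card_up_lt.
    by rewrite lt_neqAle Hf eq_sym ne.
  by rewrite !addr0 => /eqP; rewrite subr_eq0 => /eqP.
exact: (main _ f g (ltnSn _)).
Qed.
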